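(* Let $p$ be an odd prime, $e\ge1$, $s\in\mathbb{F}_p^*$, $a\in\mathbb{F}_p$ and $b\in\mathbb{F}_{p^e}$. Let $f\in\mathcal{RF}$ with $\varepsilon\in\{\pm1\}$ the sign of its Walsh transform and $f^*$ its dual. Let $N_s$ be the number of $x\in\mathbb{F}_{p^e}$ with $af(x)+\mathrm{Tr}_{p^e/p}(bx)=s$. If $e$ is even, then $N_s=0$ if $a=0,b=0$; $N_s=p^{e-1}$ if $a=0,b\ne0$; $N_s=p^{e-1}+\frac{\varepsilon(p-1)\sqrt{p^*}^e}{p}$ if $a\ne0$ and $f^*(-b/a)=a^{-1}s$; and $N_s=p^{e-1}-\frac{\varepsilon\sqrt{p^*}^e}{p}$ if $a\ne0$ and $f^*(-b/a)\ne a^{-1}s$. If $e$ is odd, then $N_s=0$ if $a=0,b=0$; $N_s=p^{e-1}$ if $a=0,b\ne0$, or if $a\ne0$ and $f^*(-b/a)=a^{-1}s$; $N_s=p^{e-1}+\frac{\varepsilon\sqrt{p^*}^eG(\eta_0,\lambda_1)}{p}$ if $a\ne0$, $f^*(-b/a)\ne a^{-1}s$ and $\eta_0(f^*(-b/a)-a^{-1}s)=1$; and $N_s=p^{e-1}-\frac{\varepsilon\sqrt{p^*}^eG(\eta_0,\lambda_1)}{p}$ if $a\ne0$, $f^*(-b/a)\ne a^{-1}s$ and $\eta_0(f^*(-b/a)-a^{-1}s)=-1$.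
   Context: $\zeta_p=e^{2\pi i/p}$; $\mathrm{Tr}_{p^e/p}$ is the trace map; $p^*=(-1)^{(p-1)/2}p$ with $\sqrt{p^*}=\sqrt p$ if $p\equiv1\pmod4$ and $\sqrt{-1}\sqrt p$ otherwise; $\eta_0$ is the quadratic character of $\mathbb{F}_p$, $\lambda_1(y)=\zeta_p^y$, and $G(\eta_0,\lambda_1)=\sum_{y\in\mathbb{F}_p^*}\eta_0(y)\zeta_p^y=\sqrt{-1}^{((p-1)/2)^2}\sqrt p$. A function $f:\mathbb{F}_{p^e}\to\mathbb{F}_p$ is weakly regular bent with sign $\varepsilon\in\{\pm1\}$ and dual $f^*:\mathbb{F}_{p^e}\to\mathbb{F}_p$ if $\sum_{x}\zeta_p^{f(x)-\mathrm{Tr}_{p^e/p}(\beta x)}=\varepsilon\sqrt{p^*}^e\zeta_p^{f^*(\beta)}$ for all $\beta\in\mathbb{F}_{p^e}$. $\mathcal{RF}$ is the set of weakly regular bent $f$ with $f(0)=0$ and $f(ax)=a^hf(x)$ for all $a\in\mathbb{F}_p^*$, $x\in\mathbb{F}_{p^e}$, for some positive even integer $h$ with $\gcd(h-1,p-1)=1$. *)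

(* Defs.v *)
From mathcomp Require Import all_boot all_order all_algebra all_field.
Import Order.TTheory GRing.Theory Num.Theory Num.Def.
Local Open Scope ring_scope.

(* zeta p = e^{2 pi i / p}: p.-root (-1) is the root of -1 of minimal
   nonnegative argument, i.e. e^{i pi / p}; its square is e^{2 pi i / p}. *)
Definition zeta (p : nat) : algC := (nthroot p (-1)) ^+ 2.

Definition chi (p : nat) (y : 'F_p) : algC := zeta p ^+ (nat_of_ord y).

(* square root of p-star := (-1)^((p-1)/2) p *)
Definition sqrtps (p : nat) : algC :=
  if (p %% 4 == 1)%N then sqrtC p%:R else Num.imaginary * sqrtC p%:R.

Definition emb (p : nat) (F : fieldType) (y : 'F_p) : F := (nat_of_ord y)%:R.

Definition Tr (p e : nat) (F : finFieldType) (x : F) : 'F_p :=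
  odflt 0 [pick y : 'F_p | emb p F y == \sum_(i < e) x ^+ (p ^ i)].

Definition eta0 (p : nat) (y : 'F_p) : algC :=
  if y == 0 then 0 else if [exists z : 'F_p, z ^+ 2 == y] then 1 else -1.

Definition gauss (p : nat) : algC :=
  \sum_(y : 'F_p | y != 0) eta0 p y * chi p y.

Definition wrbent (p e : nat) (F : finFieldType) (f : F -> 'F_p)
    (eps : int) (fstar : F -> 'F_p) : Prop :=
  (eps = 1 \/ eps = -1) /\
  forall beta : F,
    \sum_(x : F) chi p (f x - Tr p e F (beta * x))
      = eps%:~R * sqrtps p ^+ e * chi p (fstar beta).

Definition inRF (p e : nat) (F : finFieldType) (f : F -> 'F_p) : Prop :=
  [/\ exists eps fstar, wrbent p e F f eps fstar,
      f 0 = 0 &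
      exists h : nat, [/\ (0 < h)%N, ~~ odd h, coprime h.-1 p.-1 &
         forall (a : 'F_p) (x : F), a != 0 -> f (emb p F a * x) = a ^+ h * f x]].

Definition Ncount (p e : nat) (F : finFieldType) (f : F -> 'F_p)
    (a s : 'F_p) (b : F) : nat :=
  #|[set x : F | a * f x + Tr p e F (b * x) == s]|.

(* Main.v *)
Require Import Defs.
From mathcomp Require Import all_boot all_order all_algebra all_field zify ring.
Import Order.TTheory GRing.Theory Num.Theory.
Local Open Scope ring_scope.
Set Implicit Arguments. Unset Strict Implicit. Unset Printing Implicit Defensive.

Lemma zeta_p1 p : prime p -> odd p -> zeta p ^+ p = 1.
Proof.
move=> pp _; rewrite /zeta -exprM mulnC exprM rootCK ?prime_gt0 //.
by rewrite sqrrN expr1n.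
Qed.

Lemma zeta_neq1 p : prime p -> odd p -> zeta p != 1.
Proof.
move=> pp op; rewrite /zeta; set r := nthroot p (-1).
have rp : r ^+ p = -1 by rewrite rootCK ?prime_gt0.
apply/eqP => /eqP; rewrite sqrf_eq1 => /orP[] /eqP r1.
  by move: rp; rewrite r1 expr1n => /eqP; rewrite -subr_eq0 opprK -mulr2n mulrn_eq0 /= oner_eq0.
have : (r < 0) = false by apply: rootC_lt0; apply: prime_gt1.
by rewrite r1 ltrN10.
Qed.

Lemma zeta_prim p : prime p -> odd p -> p.-primitive_root (zeta p).
Proof.
move=> pp op; have [m pm md] := @prim_order_exists _ _ _ (prime_gt0 pp) (zeta_p1 pp op).
have : m != 1%N.
  apply/eqP => m1; move: pm; rewrite m1 => /prim_expr_order; rewrite expr1 => z1.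
  by move: (zeta_neq1 pp op); rewrite z1 eqxx.
move=> m1; have h : m = p by apply/(prime_nt_dvdP pp m1).
by move: pm; rewrite h.
Qed.

Lemma Fp_val_add p (y z : 'F_p) : prime p -> val (y + z) = ((val y + val z) %% p)%N.
Proof. by move=> pp; rewrite /=; congr (_ %% _)%N; apply: Fp_cast. Qed.

Lemma Fp_val_mul p (y z : 'F_p) : prime p -> val (y * z) = ((val y * val z) %% p)%N.
Proof. by move=> pp; rewrite /=; congr (_ %% _)%N; apply: Fp_cast. Qed.

Lemma Fp_val1 p : prime p -> val (1 : 'F_p) = 1%N.
Proof. by move=> pp; rewrite /= Fp_cast // modn_small // prime_gt1. Qed.

Lemma Fp_val_lt p (y : 'F_p) : prime p -> (val y < p)%N.
Proof. by move=> pp; apply: leq_trans (ltn_ord y) _; rewrite Fp_cast. Qed.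

Lemma chiD p (y z : 'F_p) : prime p -> odd p -> chi p (y + z) = chi p y * chi p z.
Proof.
move=> pp op; rewrite /chi Fp_val_add // -exprD.
by rewrite (expr_mod _ (zeta_p1 pp op)).
Qed.

Lemma chi1 p : prime p -> chi p 1 = zeta p.
Proof. by move=> pp; rewrite /chi Fp_val1 // expr1. Qed.

Lemma sum_chi p : prime p -> odd p -> \sum_(y : 'F_p) chi p y = 0.
Proof.
move=> pp op; set S := \sum_y _.
have : S * zeta p = S.
  rewrite /S mulr_suml -(chi1 pp).
  under eq_bigr => y _ do rewrite -chiD //.
  by symmetry; rewrite (reindex_inj (addIr 1)).
move/eqP; rewrite -subr_eq0 -{2}[S]mulr1 -mulrBr mulf_eq0 subr_eq0 (negbTE (zeta_neq1 pp op)) orbF.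
by move/eqP.
Qed.

Lemma sum_chiM p (u : 'F_p) : prime p -> odd p -> u != 0 -> \sum_(y : 'F_p) chi p (u * y) = 0.
Proof.
move=> pp op u0; rewrite -[RHS](sum_chi pp op).
by rewrite [RHS](reindex_inj (mulfI u0)).
Qed.

Lemma lin_indep p (m : 'F_p -> int) : prime p -> odd p ->
  \sum_(y : 'F_p) (m y)%:~R * chi p y = 0 -> forall y z, m y = m z.
Proof.
move=> pp op hs.
pose r : 'F_p := (p.-1)%:R.
have vr : val r = p.-1 by rewrite /= /r val_Fp_nat // modn_small // prednK // prime_gt0.
suff h : forall y, m y = m r by move=> y z; rewrite !h.
pose c y := m y - m r.
pose Q : {poly rat} := \sum_(y : 'F_p) (c y)%:~R *: 'X^(val y).
have coefQ k : Q`_k = \sum_(y | val y == k) (c y)%:~R by rewrite coef_sumMXn.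
have hQ : root (map_poly ratr Q) (zeta p).
  have -> : map_poly ratr Q = \sum_(y : 'F_p) ((c y)%:~R *: 'X^(val y)) :> {poly algC}.
    rewrite /Q raddf_sum; apply: eq_bigr => y _.
    change (map_poly (@ratr algC) ((c y)%:~R *: 'X^(val y)) = (c y)%:~R *: 'X^(val y)).
    by rewrite map_polyZ map_polyXn rmorph_int.
  rewrite /root horner_sum.
  under eq_bigr => y _ do rewrite hornerZ hornerXn.
  rewrite /c; under eq_bigr => y _ do rewrite intrB mulrBl.
  rewrite sumrB -mulr_sumr.
  have -> : \sum_(i : 'F_p) (m i)%:~R * zeta p ^+ val i = \sum_(y : 'F_p) (m y)%:~R * chi p y by [].
  by rewrite hs sum_chi // mulr0 subr0.
have [P0 [hmin _] dvd] := minCpolyP (zeta p).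
have szP0 : size P0 = p.
  have e : size (minCpoly (zeta p)) = size P0 by rewrite hmin size_map_poly.
  by rewrite -e (minCpoly_cyclotomic (zeta_prim pp op)) size_cyclotomic totient_prime // prednK // prime_gt0.
have szQ : (size Q <= p.-1)%N.
  apply/leq_sizeP => j hj; rewrite coefQ big1 // => y /eqP hy.
  have yr : y = r.
    apply: val_inj; rewrite vr /=; apply/eqP; rewrite eqn_leq hy hj andbT -hy.
    by rewrite -ltnS prednK ?prime_gt0 // Fp_val_lt.
  by rewrite /c yr subrr.
have Q0 : Q = 0.
  apply/eqP; apply: contraTT szQ => Qn0; rewrite -ltnNge.
  rewrite dvd in hQ; have := dvdp_leq Qn0 hQ; rewrite szP0.
  by apply: leq_trans; rewrite prednK // prime_gt0.
move=> y; apply/eqP; rewrite -subr_eq0; apply/eqP.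
have := coefQ (val y); rewrite Q0 coef0 (big_pred1 y) => [/esym/eqP|z /=].
  by rewrite intr_eq0 => /eqP.
by rewrite inj_eq //; apply: val_inj.
Qed.
Lemma Fp_unity p (y : 'F_p) : prime p -> y != 0 -> y ^+ p.-1 = 1.
Proof.
move=> pp y0; have : y ^+ p.-1 * y = 1 * y.
  by rewrite -exprSr prednK ?prime_gt0 // mul1r -{2}(expf_card y) card_Fp.
by move/(mulIf y0).
Qed.

Lemma Fp_gen p : prime p -> {g : 'F_p | (p.-1).-primitive_root g}.
Proof.
move=> pp; pose rs := enum (predC1 (0 : 'F_p)).
have : has (p.-1).-primitive_root rs.
  apply: cyclic.has_prim_root.
  - by rewrite -ltnS prednK ?prime_gt1 // prime_gt0.
  - apply/allP => x; rewrite mem_enum => x0.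
    by apply/unity_rootP; apply: Fp_unity.
  - exact: enum_uniq.
  - by rewrite -cardE cardC1 card_Fp.
by case/hasP/sig2W => g _ hg; exists g.
Qed.

Lemma Fp_p1_even p : prime p -> odd p -> (2 %| p.-1)%N.
Proof.
move=> pp op; rewrite -(odd_halfK op) -muln2.
exact: dvdn_mull (dvdnn 2).
Qed.

Lemma prim_neq0 p (g : 'F_p) : prime p -> odd p -> (p.-1).-primitive_root g -> g != 0.
Proof.
move=> pp op pg; rewrite (prim_root_eq0 pg) -lt0n -ltnS prednK ?prime_gt0 //.
exact: prime_gt1.
Qed.

Lemma eta0_pow p (g : 'F_p) k : prime p -> odd p -> (p.-1).-primitive_root g ->
  eta0 p (g ^+ k) = (-1) ^+ k.
Proof.
move=> pp op pg; have g0 := prim_neq0 pp op pg.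
rewrite /eta0 expf_eq0 (negbTE g0) andbF -signr_odd.
case: (boolP [exists z, z ^+ 2 == g ^+ k]) => [/existsP[z /eqP hz] | hn].
  have z0 : z != 0.
    by apply/eqP => z0; move: hz; rewrite z0 expr2 mul0r => /esym /eqP; rewrite expf_eq0 (negbTE g0) andbF.
  have [i hi] := prim_rootP pg (Fp_unity pp z0).
  move: hz; rewrite hi -exprM => /eqP; rewrite (eq_prim_root_expr pg) => /eqP h.
  have H2 := Fp_p1_even pp op.
  have : ((i * 2) %% 2 = k %% 2)%N by rewrite -(modn_dvdm (i * 2) H2) h (modn_dvdm _ H2).
  by rewrite modnMl modn2 => <-.
case: (boolP (odd k)) => // ek; case/existsP: hn; exists (g ^+ k./2).
by rewrite -exprM -[X in g ^+ X](odd_double_half k) (negbTE ek) add0n -mul2n mulnC.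
Qed.

Lemma eta00 p : eta0 p 0 = 0.
Proof. by rewrite /eta0 eqxx. Qed.

Lemma eta0M p (y z : 'F_p) : prime p -> odd p -> eta0 p (y * z) = eta0 p y * eta0 p z.
Proof.
move=> pp op; have [g pg] := Fp_gen pp.
have [->|y0] := eqVneq y 0; first by rewrite mul0r eta00 mul0r.
have [->|z0] := eqVneq z 0; first by rewrite mulr0 eta00 mulr0.
have [i ->] := prim_rootP pg (Fp_unity pp y0).
have [j ->] := prim_rootP pg (Fp_unity pp z0).
by rewrite -exprD !(eta0_pow _ pp op pg) exprD.
Qed.

Lemma eta0_sq p (y : 'F_p) : prime p -> odd p -> y != 0 -> eta0 p y * eta0 p y = 1.
Proof.
move=> pp op y0; have [g pg] := Fp_gen pp.
have [i ->] := prim_rootP pg (Fp_unity pp y0).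
by rewrite (eta0_pow _ pp op pg) -expr2 -exprM mulnC exprM sqrrN expr1n expr1n.
Qed.

Lemma sum_eta0 p : prime p -> odd p -> \sum_(y : 'F_p) eta0 p y = 0.
Proof.
move=> pp op; have [g pg] := Fp_gen pp; have g0 := prim_neq0 pp op pg.
set S := \sum_y _.
have : S = - S.
  rewrite {1}/S (reindex_inj (mulfI g0)) /=.
  have eg : eta0 p g = -1 by rewrite -[g]expr1 (eta0_pow _ pp op pg) expr1.
  under eq_bigr => y _ do rewrite (eta0M _ _ pp op) eg mulN1r.
  by rewrite sumrN.
by move/eqP; rewrite -addr_eq0 -mulr2n mulrn_eq0 => /orP[//|/eqP].
Qed.

Lemma eta0N1 p : prime p -> odd p -> eta0 p (-1) = (-1) ^+ p./2.
Proof.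
move=> pp op; have [g pg] := Fp_gen pp; have g0 := prim_neq0 pp op pg.
set h := p./2.
have hh : (h * 2 = p.-1)%N by rewrite muln2 /h odd_halfK.
suff -> : -1 = g ^+ h by rewrite (eta0_pow _ pp op pg).
have : (g ^+ h) ^+ 2 = 1 by rewrite -exprM hh (prim_expr_order pg).
move/eqP; rewrite sqrf_eq1 => /orP[] /eqP // gh1.
have p2 := odd_prime_gt2 op pp.
have hpos : (0 < h)%N by lia.
have := dvdn_leq hpos (_ : (p.-1 %| h)%N); rewrite (prim_order_dvd pg) gh1 eqxx.
move=> /(_ isT); lia.
Qed.

Lemma sqrtps_sq p : prime p -> odd p -> sqrtps p ^+ 2 = eta0 p (-1) * p%:R.
Proof.
move=> pp op; rewrite /sqrtps (eta0N1 pp op) -signr_odd.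
have e1 := odd_double_half p; have e2 := odd_double_half p./2.
rewrite op in e1.
have -> : (p %% 4 == 1)%N = ~~ odd p./2.
  move: e1 e2; case: (odd p./2) => /= e1 e2.
    apply/negbTE; lia.
  apply/eqP; lia.
case: (odd p./2) => /=.
  by rewrite exprMn sqrtCK sqrCi mulN1r.
by rewrite sqrtCK expr0 mul1r.
Qed.

Lemma chi0 p : chi p 0 = 1.
Proof. by rewrite /chi /= expr0. Qed.

Lemma gauss_sq p : prime p -> odd p -> gauss p ^+ 2 = eta0 p (-1) * p%:R.
Proof.
move=> pp op.
have gE : gauss p = \sum_y eta0 p y * chi p y.
  by rewrite /gauss [RHS](bigD1 0) //= eta00 mul0r add0r.
rewrite expr2 {1}gE mulr_suml.
transitivity (\sum_(y : 'F_p) \sum_(w : 'F_p) eta0 p w * chi p (y * (1 + w))).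
  apply: eq_bigr => y _; rewrite gE mulr_sumr.
  have [->|y0] := eqVneq y 0.
    rewrite big1; last by move=> z _; rewrite eta00 !mul0r.
    under eq_bigr => w _ do rewrite mul0r chi0 mulr1.
    by rewrite sum_eta0.
  rewrite (reindex_inj (mulfI y0)) /=; apply: eq_bigr => w _.
  rewrite (eta0M _ _ pp op) mulrDr mulr1 (chiD _ _ pp op).
  transitivity ((eta0 p y * eta0 p y) * (eta0 p w * (chi p y * chi p (y * w)))); first by ring.
  by rewrite (eta0_sq pp op y0) mul1r.
rewrite exchange_big /= (bigD1 (-1)) //= [X in _ + X]big1 ?addr0.
  rewrite -mulr_sumr addrN; under eq_bigr => y _ do rewrite mulr0 chi0.
  by rewrite sumr_const card_Fp.
move=> w w1; rewrite -mulr_sumr.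
under eq_bigr => y _ do rewrite mulrC.
rewrite sum_chiM ?mulr0 //.
by apply: contraNneq w1 => h; rewrite -(addKr 1 w) h addr0.
Qed.
Lemma embD p (F : finFieldType) (y z : 'F_p) : prime p -> p \in [pchar F] ->
  emb p F (y + z) = emb p F y + emb p F z.
Proof. by move=> pp chF; rewrite /emb Fp_val_add // GRing.natr_mod_pchar // natrD. Qed.

Lemma embM p (F : finFieldType) (y z : 'F_p) : prime p -> p \in [pchar F] ->
  emb p F (y * z) = emb p F y * emb p F z.
Proof. by move=> pp chF; rewrite /emb Fp_val_mul // GRing.natr_mod_pchar // natrM. Qed.

Lemma emb0 p (F : finFieldType) : emb p F 0 = 0.
Proof. by []. Qed.

Lemma emb1 p (F : finFieldType) : prime p -> emb p F 1 = 1.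
Proof. by move=> pp; rewrite /emb Fp_val1. Qed.

Lemma embN p (F : finFieldType) (y : 'F_p) : prime p -> p \in [pchar F] ->
  emb p F (- y) = - emb p F y.
Proof.
move=> pp chF; apply/eqP; rewrite -subr_eq0 opprK -embD // addNr.
by [].
Qed.

Lemma emb_eq0 p (F : finFieldType) (y : 'F_p) : prime p -> p \in [pchar F] ->
  (emb p F y == 0) = (y == 0).
Proof.
move=> pp chF; apply/idP/idP => [|/eqP ->] //.
rewrite /emb -(dvdn_pcharf chF) => hd; apply/eqP; apply: val_inj => /=.
have h2 : (nat_of_ord y < p)%N by apply: Fp_val_lt.
move: hd h2; case: (nat_of_ord y) => // n /dvdn_leq h1 h2.
have := h1 isT; lia.
Qed.

Lemma emb_inj p (F : finFieldType) : prime p -> p \in [pchar F] -> injective (emb p F).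
Proof.
move=> pp chF y z /eqP; rewrite -subr_eq0 -embN // -embD // emb_eq0 // subr_eq0.
by move/eqP.
Qed.

Lemma embX p (F : finFieldType) (y : 'F_p) n : prime p -> p \in [pchar F] ->
  emb p F (y ^+ n) = emb p F y ^+ n.
Proof.
move=> pp chF; elim: n => [|n IH]; first by rewrite !expr0 emb1.
by rewrite !exprS embM // IH.
Qed.

Lemma emb_frob p (F : finFieldType) (y : 'F_p) n : prime p -> p \in [pchar F] ->
  emb p F y ^+ (p ^ n) = emb p F y.
Proof.
move=> pp chF; elim: n => [|n IH]; first by rewrite expn0 expr1.
have yp : y ^+ p = y by have := expf_card y; rewrite card_Fp.
by rewrite expnS exprM -embX // yp IH.
Qed.

Lemma frobD p (F : finFieldType) (x y : F) n : p \in [pchar F] ->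
  (x + y) ^+ (p ^ n) = x ^+ (p ^ n) + y ^+ (p ^ n).
Proof.
move=> chF; apply: exprDn_pchar; rewrite pnatX pnatE ?(pcharf_prime chF) //.
by rewrite chF.
Qed.

Lemma TrE p e (F : finFieldType) (x : F) : prime p -> #|F| = (p ^ e)%N ->
  emb p F (Tr p e F x) = \sum_(i < e) x ^+ (p ^ i).
Proof.
move=> pp cF; have chF := card_finPcharP cF pp.
rewrite /Tr; case: pickP => [y /eqP // | none].
exfalso; set T := \sum_(i < e) _ in none.
have Tp : T ^+ p = T.
  rewrite -[T ^+ p]pFrobenius_autE (rmorph_sum (pFrobenius_aut chF)) /=.
  under eq_bigr => i _ do rewrite pFrobenius_autE -exprM -expnSr.
  have h1 : \sum_(i < e.+1) x ^+ (p ^ i) = \sum_(i < e) x ^+ (p ^ i) + x ^+ (p ^ e).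
    exact: big_ord_recr.
  have h2 : \sum_(i < e.+1) x ^+ (p ^ i) = x ^+ (p ^ 0) + \sum_(i < e) x ^+ (p ^ i.+1).
    exact: big_ord_recl.
  rewrite h1 -cF expf_card expn0 expr1 in h2.
  by apply: (addIr x); rewrite /T h2 addrC.
pose P : {poly F} := 'X^p - 'X.
have szP : size P = p.+1.
  by rewrite /P size_polyDl size_polyXn // size_polyN size_polyX ltnS prime_gt1.
have P0 : P != 0 by rewrite -size_poly_eq0 szP.
pose rs := T :: [seq emb p F y | y <- enum 'F_p].
have hall : all (root P) rs.
  apply/allP => z; rewrite inE => /orP[/eqP -> | /mapP[y _ ->]].
    by rewrite /root /P !hornerE Tp subrr.
  have := emb_frob y 1 pp chF; rewrite expn1 => h.
  by rewrite /root /P !hornerE h subrr.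
have huniq : uniq rs.
  rewrite /= map_inj_uniq ?enum_uniq ?andbT; last exact: emb_inj.
  by apply/mapP => -[y _ /esym/eqP]; rewrite none.
have := max_poly_roots P0 hall huniq.
by rewrite /= size_map -cardE card_Fp // szP ltnn.
Qed.

Lemma TrD p e (F : finFieldType) (x y : F) : prime p -> #|F| = (p ^ e)%N ->
  Tr p e F (x + y) = Tr p e F x + Tr p e F y.
Proof.
move=> pp cF; have chF := card_finPcharP cF pp.
apply: (emb_inj pp chF); rewrite embD // !TrE // -big_split /=.
by apply: eq_bigr => i _; rewrite frobD.
Qed.

Lemma TrZ p e (F : finFieldType) (u : 'F_p) (x : F) : prime p -> #|F| = (p ^ e)%N ->
  Tr p e F (emb p F u * x) = u * Tr p e F x.
Proof.
move=> pp cF; have chF := card_finPcharP cF pp.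
apply: (emb_inj pp chF); rewrite embM // !TrE // mulr_sumr.
by apply: eq_bigr => i _; rewrite exprMn emb_frob.
Qed.

Lemma Tr_nz p e (F : finFieldType) : prime p -> #|F| = (p ^ e)%N -> (0 < e)%N ->
  exists x : F, Tr p e F x != 0.
Proof.
move=> pp cF e0; have chF := card_finPcharP cF pp.
case: (pickP (fun x => Tr p e F x != 0)) => [x hx|hall]; first by exists x.
exfalso.
pose P : {poly F} := \sum_(i < e) 'X^(p ^ i).
have coefP j : P`_j = \sum_(i < e) (j == p ^ i)%N%:R.
  by rewrite coef_sum; apply: eq_bigr => i _; rewrite coefXn.
have P0 : P != 0.
  apply/eqP => /(congr1 (fun q : {poly F} => q`_(p ^ e.-1)%N)); rewrite coefP coef0.
  have e1 : (e.-1 < e)%N by rewrite prednK.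
  rewrite (bigD1 (Ordinal e1)) //= eqxx big1 ?addr0.
    by move/eqP; rewrite oner_eq0.
  move=> i /eqP hi; rewrite eqn_exp2l ?prime_gt1 //.
  by case: eqP => // h; exfalso; apply: hi; apply: val_inj.
have szP : (size P <= (p ^ e.-1).+1)%N.
  apply/leq_sizeP => j hj; rewrite coefP big1 // => i _.
  case: eqP => // h; exfalso; move: hj; rewrite h ltnNge.
  by rewrite leq_exp2l ?prime_gt1 // -ltnS prednK // ltn_ord.
have hr : all (root P) (enum F).
  apply/allP => x _; have := hall x; move/negbFE; rewrite -(emb_eq0 _ pp chF) TrE // => hx.
  rewrite /root /P horner_sum; under eq_bigr => i _ do rewrite hornerXn.
  exact: hx.
have := max_poly_roots P0 hr (enum_uniq _).
rewrite -cardE cF => h.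
have : (expn p e < (expn p e.-1).+1)%N by apply: leq_trans h szP.
have hpe : (expn p e = expn p e.-1 * p)%N by rewrite -expnSr prednK.
have h2 : (expn p e.-1 * 2 <= expn p e.-1 * p)%N by rewrite leq_mul2l prime_gt1 ?orbT.
have hpos : (0 < expn p e.-1)%N by rewrite expn_gt0 prime_gt0.
lia.
Qed.

Lemma sum_fibers (T : finType) p (phi : T -> 'F_p) :
  (\sum_(j : 'F_p) #|[set x | phi x == j]|)%N = #|T|.
Proof.
rewrite -sum1_card (partition_big phi predT) //=; apply: eq_bigr => j _.
by rewrite sum1_card cardsE.
Qed.

Lemma sum_count (T : finType) p (phi : T -> 'F_p) (G : 'F_p -> algC) :
  \sum_(x : T) G (phi x) = \sum_(j : 'F_p) #|[set x | phi x == j]|%:R * G j.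
Proof.
rewrite (partition_big phi predT) //=; apply: eq_bigr => j _.
transitivity (\sum_(x | phi x == j) G j); first by apply: eq_bigr => x /eqP ->.
by rewrite sumr_const cardsE mulr_natl.
Qed.

Definition eta0i p (y : 'F_p) : int :=
  if y == 0 then 0 else if [exists z : 'F_p, z ^+ 2 == y] then 1 else -1.
Arguments eta0i : clear implicits.

Lemma eta0E p (y : 'F_p) : eta0 p y = (eta0i p y)%:~R.
Proof. by rewrite /eta0 /eta0i; case: ifP => //; case: ifP. Qed.

Lemma Tr0 p e (F : finFieldType) : prime p -> #|F| = (p ^ e)%N -> Tr p e F 0 = 0.
Proof. by move=> pp cF; have := TrZ 0 (0 : F) pp cF; rewrite mulr0 mul0r. Qed.

Lemma Tr_fiber p e (F : finFieldType) (b : F) (u : 'F_p) :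
  prime p -> #|F| = (p ^ e)%N -> (0 < e)%N -> b != 0 ->
  #|[set x | Tr p e F (b * x) == u]| = (p ^ e.-1)%N.
Proof.
move=> pp cF e0 b0; have chF := card_finPcharP cF pp.
pose L x := Tr p e F (b * x).
have LD x y : L (x + y) = L x + L y by rewrite /L mulrDr TrD.
have LN x : L (- x) = - L x.
  by apply/eqP; rewrite -addr_eq0 -LD addNr /L mulr0 Tr0.
have [x1 hx1] := Tr_nz pp cF e0.
have surj v : exists w, L w = v.
  exists (emb p F (v / Tr p e F x1) * x1 / b).
  by rewrite /L mulrC divfK // TrZ // divfK.
have fib v : #|[set x | L x == v]| = #|[set x | L x == 0]|.
  have [w hw] := surj v.
  suff -> : [set x | L x == v] = [set y + w | y in [set x | L x == 0]].
    by rewrite card_imset //; apply: addIr.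
  apply/setP => x; rewrite inE.
  apply/idP/imsetP.
    move=> /eqP hx; exists (x - w); last by rewrite subrK.
    by rewrite inE LD LN hx hw subrr.
  by move=> [y]; rewrite inE => /eqP hy ->; rewrite LD hy hw add0r.
have := sum_fibers L; rewrite cF.
under eq_bigr => v _ do rewrite fib.
have hpe : (p ^ e = p * p ^ e.-1)%N by rewrite -expnS prednK.
rewrite sum_nat_const card_Fp // hpe.
move/eqP; rewrite eqn_pmul2l ?prime_gt0 // => /eqP h.
by rewrite -h; exact: fib.
Qed.

Lemma dist_int p (n : 'F_p -> nat) (w : 'F_p -> int) :
  prime p -> odd p ->
  \sum_j (n j)%:R * chi p j = \sum_j (w j)%:~R * chi p j ->
  exists A : int, forall j, (n j)%:R = A%:~R + (w j)%:~R :> algC.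
Proof.
move=> pp op h.
pose m j : int := (n j)%:Z - w j.
have hm : \sum_j (m j)%:~R * chi p j = 0.
  under eq_bigr => j _ do rewrite /m intrB mulrBl.
  by rewrite sumrB h subrr.
exists (m 0) => j; rewrite -(lin_indep pp op hm j 0) /m intrB subrK.
by [].
Qed.

Lemma gaussE p : gauss p = \sum_(y : 'F_p) eta0 p y * chi p y.
Proof. by rewrite /gauss [RHS](bigD1 0) //= eta00 mul0r add0r. Qed.

Lemma gauss_shift p (c : 'F_p) : prime p -> odd p ->
  gauss p * chi p c = \sum_(j : 'F_p) eta0 p (j - c) * chi p j.
Proof.
move=> pp op; rewrite gaussE mulr_suml [RHS](reindex_inj (addIr c)) /=.
by apply: eq_bigr => y _; rewrite addrK chiD // mulrA.
Qed.

Lemma sum_eta0_shift p (c : 'F_p) : prime p -> odd p ->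
  \sum_(j : 'F_p) eta0 p (j - c) = 0.
Proof.
move=> pp op; rewrite (reindex_inj (addIr c)) /=.
under eq_bigr => y _ do rewrite addrK.
exact: sum_eta0.
Qed.

Unset Implicit Arguments.

Theorem lemma4p1 (p e : nat) (F : finFieldType) (f fstar : F -> 'F_p)
    (eps : int) (s a : 'F_p) (b : F) :
  prime p -> odd p -> (0 < e)%N -> #|F| = (p ^ e)%N ->
  inRF p e F f -> wrbent p e F f eps fstar -> s != 0 ->
  let N : algC := (Ncount p e F f a s b)%:R in
  let q : algC := (p ^ e.-1)%:R in
  let c := fstar (- b / emb p F a) in
  let t := a^-1 * s in
  (a = 0 -> b = 0 -> N = 0) /\
  (a = 0 -> b != 0 -> N = q) /\
  (~~ odd e -> a != 0 -> c = t ->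
     N = q + eps%:~R * (p%:R - 1) * sqrtps p ^+ e / p%:R) /\
  (~~ odd e -> a != 0 -> c != t ->
     N = q - eps%:~R * sqrtps p ^+ e / p%:R) /\
  (odd e -> a != 0 -> c = t -> N = q) /\
  (odd e -> a != 0 -> c != t -> eta0 p (c - t) = 1 ->
     N = q + eps%:~R * sqrtps p ^+ e * gauss p / p%:R) /\
  (odd e -> a != 0 -> c != t -> eta0 p (c - t) = -1 ->
     N = q - eps%:~R * sqrtps p ^+ e * gauss p / p%:R).
Proof.
move=> pp op e0 cF hRF hW s0 N q c t.
have chF := card_finPcharP cF pp.
have p0 : (p%:R : algC) != 0 by rewrite pnatr_eq0 -lt0n prime_gt0.
have qE : (p ^ e)%:R = p%:R * q :> algC by rewrite /q -natrM -expnS prednK.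
have A0 : a = 0 -> Ncount p e F f a s b = #|[set x | Tr p e F (b * x) == s]|.
  by move=> ->; apply: eq_card => x; rewrite !inE mul0r add0r.
split.
  move=> a0 b0; rewrite /N A0 // b0; apply/eqP; rewrite pnatr_eq0 cards_eq0.
  by apply/eqP/setP => x; rewrite !inE mul0r Tr0 // eq_sym (negbTE s0).
split.
  by move=> a0 b0; rewrite /N A0 // Tr_fiber.
have [a0|a0] := eqVneq a 0.
  by do !split; move=> _.
case: hW => _ hW.
set beta := - b / emb p F a.
have ea0 : emb p F a != 0 by rewrite emb_eq0.
pose g x := f x - Tr p e F (beta * x).
pose n j := #|[set x | g x == j]|.
have NE : N = (n t)%:R.
  rewrite /N /n; congr (_%:R); apply: eq_card => x; rewrite !inE.
  have hb : b * x = emb p F (- a) * (beta * x) by rewrite embN // /beta; field.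
  rewrite hb TrZ // mulNr -mulrBr /t /g.
  apply/eqP/eqP => h; first by rewrite -h mulKf.
  by rewrite h mulrA divff // mul1r.
have W : \sum_j (n j)%:R * chi p j = eps%:~R * sqrtps p ^+ e * chi p c.
  by rewrite -(sum_count g (chi p)); exact: hW.
have Sn : \sum_j (n j)%:R = (p ^ e)%:R :> algC by rewrite -natr_sum sum_fibers cF.
have sumA (A : int) : \sum_(j : 'F_p) (A%:~R : algC) = p%:R * A%:~R.
  by rewrite sumr_const card_Fp // mulr_natl.
case: (boolP (odd e)) => oe; last first.
  have [K hK] : exists K : int, eps%:~R * sqrtps p ^+ e = K%:~R.
    apply/intrP; rewrite -[e](odd_double_half e) (negbTE oe) add0n -muln2 mulnC exprM.
    rewrite sqrtps_sq // eta0E.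
    by rewrite rpredM ?rpredX ?rpredM ?rpred_int ?rpred_nat.
  have hW' : \sum_j (n j)%:R * chi p j = \sum_j (K * (j == c)%:Z)%:~R * chi p j.
    rewrite W hK [RHS](bigD1 c) //= eqxx mulr1 big1 ?addr0 // => j /negbTE ->.
    by rewrite mulr0 mul0r.
  have [A hA] := dist_int pp op hW'.
  have hS : p%:R * A%:~R + K%:~R = p%:R * q.
    rewrite -qE -Sn; under eq_bigr => j _ do rewrite hA.
    rewrite big_split /= sumA; congr (_ + _).
    rewrite (bigD1 c) //= eqxx mulr1 big1 ?addr0 // => j /negbTE ->.
    by rewrite mulr0.
  have qE' : q = (p%:R * A%:~R + K%:~R) / p%:R by rewrite hS mulrC mulKf.
  split.
    move=> _ _ ct; rewrite NE hA -ct eqxx mulr1 qE' -hK.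
    move: p0; set P := (p%:R : algC); set X := sqrtps p ^+ e; set E := (eps%:~R : algC).
    set B := (A%:~R : algC) => p0.
    by field.
  split.
    move=> _ _ /negbTE ct; rewrite NE hA eq_sym ct mulr0 addr0 qE' -hK.
    move: p0; set P := (p%:R : algC); set X := sqrtps p ^+ e; set E := (eps%:~R : algC).
    set B := (A%:~R : algC) => p0.
    by field.
  by do !split; case.
split; first by case.
split; first by case.
have [bb hbb] : exists bb : bool, sqrtps p = (-1) ^+ bb * gauss p.
  have : (sqrtps p - gauss p) * (sqrtps p + gauss p) = 0.
    by rewrite -subr_sqr sqrtps_sq // gauss_sq // subrr.
  move/eqP; rewrite mulf_eq0 => /orP[] /eqP h.
    by exists false; rewrite expr0 mul1r; apply/eqP; rewrite -subr_eq0 h.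
  by exists true; rewrite expr1 mulN1r; apply/eqP; rewrite -addr_eq0 h.
have [K hK0] : exists K : int, eps%:~R * (sqrtps p ^+ 2) ^+ e./2 * (-1) ^+ bb = K%:~R.
  apply/intrP; rewrite sqrtps_sq // eta0E.
  apply: rpredM; first by rewrite rpredM ?rpredX ?rpredM ?rpred_int ?rpred_nat.
  by apply: rpredX; rewrite rpredN rpred1.
have hK : eps%:~R * sqrtps p ^+ e = K%:~R * gauss p.
  have he : e = (1 + 2 * e./2)%N by rewrite mul2n -[in LHS](odd_double_half e) oe.
  rewrite -hK0 {1}he exprD expr1 exprM.
  set S2 := sqrtps p ^+ 2; rewrite hbb; set G := gauss p; set E := (eps%:~R : algC).
  by ring.
have hW' : \sum_j (n j)%:R * chi p j = \sum_j (K * eta0i p (j - c))%:~R * chi p j.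
  rewrite W hK -mulrA gauss_shift // mulr_sumr; apply: eq_bigr => j _.
  by rewrite intrM -eta0E mulrA.
have [A hA] := dist_int pp op hW'.
have hAq : A%:~R = q.
  apply: (mulfI p0); rewrite -qE -Sn; under eq_bigr => j _ do rewrite hA.
  rewrite big_split /= sumA.
  under eq_bigr => j _ do rewrite intrM -eta0E.
  by rewrite -mulr_sumr sum_eta0_shift // mulr0 addr0.
have hG2 := gauss_sq pp op.
have NE2 : N = q + K%:~R * eta0 p (t - c) by rewrite NE hA hAq intrM -eta0E.
split.
  by move=> _ _ ct; rewrite NE2 ct subrr eta00 mulr0 addr0.
have e2 : K%:~R * gauss p * gauss p = K%:~R * (eta0 p (-1) * p%:R).
  by rewrite -mulrA -expr2 hG2.
have tc : t - c = -1 * (c - t) by rewrite mulN1r opprB.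
split.
  move=> _ _ _ h1; rewrite NE2 tc (eta0M _ _ pp op) h1 mulr1 hK e2.
  move: p0; set P := (p%:R : algC); set G := eta0 p (-1); set B := (K%:~R : algC) => p0.
  by field.
move=> _ _ _ h1; rewrite NE2 tc (eta0M _ _ pp op) h1 mulrN1 hK e2.
move: p0; set P := (p%:R : algC); set G := eta0 p (-1); set B := (K%:~R : algC) => p0.
by field.
Qed.
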